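(* For all integers $n\ge 0$ and $m>nt$, \[ \mathcal{L}^{(t)}\big(U^{(t)}_m(x)\,U^{(t)}_n(x)\big)=0 \quad\text{and}\quad \mathcal{L}^{(t)}\big(U^{(t)}_{nt}(x)\,U^{(t)}_n(x)\big)=1 . \]
   Context: Fix an integer $t\ge1$. For $n\ge 0$ let $P_n$ be the path graph with vertices $1,\dots,n$ and edges $\{i,i+1\}$. A $t$-path in $P_n$ is a set of $t+1$ consecutive vertices $\{i,\dots,i+t\}$. Define $U^{(t)}_n(x)=\sum_{F}(-1)^{|F|}x^{\,n-(t+1)|F|}$, the sum over all families $F$ of pairwise vertex-disjoint $t$-paths in $P_n$ ($U^{(t)}_0=1$). Let $\mu^{(t)}_m$ be the number of noncrossing set partitions of $[m]$ all of whose blocks have size $t+1$ ($\mu^{(t)}_0=1$; noncrossing means no $a<b<c<d$ with $a,c$ in one block and $b,d$ in another), and let $\mathcal{L}^{(t)}$ be the linear functional on polynomials with $\mathcal{L}^{(t)}(x^m)=\mu^{(t)}_m$. *)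

(* Defs.v *)
From HB Require Import structures.
From mathcomp Require Import all_boot all_order all_algebra.
Set Implicit Arguments. Unset Strict Implicit. Unset Printing Implicit Defensive.
Import GRing.Theory.
Local Open Scope ring_scope.

(* Vertices of P_n are 1..n, encoded by i : 'I_n standing for vertex i+1.
   A t-path {i,...,i+t} is encoded by its starting vertex s : 'I_n, and it
   exists in P_n iff s + t < n (i.e. its last vertex i+t is <= n). *)
Definition tpath_vertices (t n : nat) (s : 'I_n) : {set 'I_n} :=
  [set v : 'I_n | (s <= v)%N && (v <= s + t)%N].

Definition disjoint_tpath_family (t n : nat) (F : {set 'I_n}) : bool :=
  [forall s in F, (s + t < n)%N] &&
  [forall s in F, forall s' in F,
     (s != s') ==> [disjoint tpath_vertices t s & tpath_vertices t s']].

Definition U (t n : nat) : {poly int} :=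
  \sum_(F : {set 'I_n} | disjoint_tpath_family t F)
     (-1) ^+ #|F| *: 'X^(n - t.+1 * #|F|).

Definition noncrossing (m : nat) (P : {set {set 'I_m}}) : bool :=
  [forall B1 in P, forall B2 in P, (B1 != B2) ==>
    [forall a : 'I_m, forall b : 'I_m, forall c : 'I_m, forall d : 'I_m,
      ~~ [&& (a < b)%N, (b < c)%N, (c < d)%N,
             a \in B1, c \in B1, b \in B2 & d \in B2]]].

Definition mu (t m : nat) : nat :=
  #|[set P : {set {set 'I_m}} |
      [&& partition P [set: 'I_m],
          [forall B in P, #|B| == t.+1] & noncrossing P]]|.

Definition Lfun (t : nat) (p : {poly int}) : int :=
  \sum_(i < size p) p`_i * (mu t i)%:R.

(* Main.v *)
Require Import Defs.
From HB Require Import structures.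
From mathcomp Require Import all_boot all_order all_algebra.
Set Implicit Arguments. Unset Strict Implicit. Unset Printing Implicit Defensive.
Import GRing.Theory.
Local Open Scope ring_scope.

Lemma disjP (T : finType) (A B : {pred T}) :
  reflect (forall x, x \in A -> x \in B -> False) [disjoint A & B].
Proof.
rewrite disjoint_subset; apply: (iffP subsetP) => H x xA.
  by move=> xB; have := H x xA; rewrite inE /= xB.
by rewrite inE /=; apply/negP => xB; apply: H xA xB.
Qed.

Section Lin.
Variable t : nat.

Lemma LfunE (p : {poly int}) N : (size p <= N)%N ->
  Lfun t p = \sum_(i < N) p`_i * (mu t i)%:R.
Proof.
move=> hN; rewrite /Lfun (big_ord_widen N (fun i => p`_i * (mu t i)%:R) hN).
rewrite big_mkcond /=; apply: eq_bigr => i _.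
by case: ltnP => // hi; rewrite nth_default // mul0r.
Qed.

Lemma Lfun_add p q : Lfun t (p + q) = Lfun t p + Lfun t q.
Proof.
pose N := maxn (size p) (size q).
rewrite (@LfunE _ N) ?(leq_trans (size_polyD _ _)) //.
rewrite (@LfunE p N) ?leq_maxl // (@LfunE q N) ?leq_maxr //.
by rewrite -big_split; apply: eq_bigr => i _; rewrite coefD mulrDl.
Qed.

Lemma Lfun_scale c p : Lfun t (c *: p) = c * Lfun t p.
Proof.
rewrite (@LfunE _ (size p)) ?size_scale_leq // (@LfunE p (size p)) //.
by rewrite mulr_sumr; apply: eq_bigr => i _; rewrite coefZ mulrA.
Qed.

Lemma Lfun0 : Lfun t 0 = 0.
Proof. by rewrite /Lfun size_poly0 big_ord0. Qed.

Lemma Lfun_sum (I : finType) (P : pred I) (F : I -> {poly int}) :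
  Lfun t (\sum_(i | P i) F i) = \sum_(i | P i) Lfun t (F i).
Proof.
by apply: (big_morph _ Lfun_add Lfun0).
Qed.

Lemma Lfun_opp p : Lfun t (- p) = - Lfun t p.
Proof. by rewrite -scaleN1r Lfun_scale mulN1r. Qed.

Lemma LfunXn n : Lfun t 'X^n = (mu t n)%:R.
Proof.
rewrite /Lfun size_polyXn big_ord_recr /= big1 ?add0r.
  by rewrite coefXn eqxx mul1r.
by move=> i _; rewrite coefXn (ltn_eqF (ltn_ord i)) mul0r.
Qed.
End Lin.

Section Fam.
Variable t : nat.

Definition pw n (F : {set 'I_n}) :=
  [forall s in F, forall s' in F, (s < s')%N ==> (s + t < s')%N].
Definition bnd n (F : {set 'I_n}) := [forall s in F, (s + t < n)%N].

Lemma in_tpath n (s v : 'I_n) :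
  (v \in tpath_vertices t s) = (s <= v)%N && (v <= s + t)%N.
Proof. by rewrite inE. Qed.

Lemma famP n (F : {set 'I_n}) : disjoint_tpath_family t F = bnd F && pw F.
Proof.
rewrite /disjoint_tpath_family /bnd /pw; congr (_ && _).
apply/idP/idP => /forall_inP H; apply/forall_inP => s sF; apply/forall_inP => s' s'F.
  apply/implyP => lt; have := forall_inP (H s sF) s' s'F.
  have -> : s != s' by rewrite -val_eqE /= neq_ltn lt.
  move=> /= /disjP D; rewrite ltnNge; apply/negP => le.
  by apply: (D s'); rewrite in_tpath ?leqnn ?le ?(ltnW lt) ?leq_addr.
apply/implyP => ne; apply/disjP => v; rewrite !in_tpath => /andP[a b] /andP[c d].
case: (ltngtP s s') => [lt|lt|eq].
- have := implyP (forall_inP (H s sF) s' s'F) lt.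
  by rewrite ltnNge (leq_trans c b).
- have := implyP (forall_inP (H s' s'F) s sF) lt.
  by rewrite ltnNge (leq_trans a d).
- by move: ne; rewrite -val_eqE /= eq eqxx.
Qed.

Lemma forall_imset (A B : finType) (w : A -> B) (G : {set A}) (P : pred B) :
  [forall x in w @: G, P x] = [forall y in G, P (w y)].
Proof.
apply/forall_inP/forall_inP => H y yG; first by apply: H; exact: imset_f.
by case/imsetP: yG => z zG ->; apply: H.
Qed.

Lemma pw_imset m n (w : 'I_m -> 'I_n) (hw : forall i, val (w i) = val i)
  (G : {set 'I_m}) : pw (w @: G) = pw G.
Proof.
apply/idP/idP => /forall_inP H; apply/forall_inP => s sG; apply/forall_inP => s' s'G.
  have := forall_inP (H (w s) (imset_f _ sG)) (w s') (imset_f _ s'G).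
  by rewrite !hw.
case/imsetP: sG => a aG ->; case/imsetP: s'G => b bG ->; rewrite !hw.
exact: (forall_inP (H a aG) b bG).
Qed.

Lemma bnd_imset m n (w : 'I_m -> 'I_n) (hw : forall i, val (w i) = val i)
  (G : {set 'I_m}) : bnd (w @: G) = [forall s in G, (s + t < n)%N].
Proof. by rewrite /bnd forall_imset; apply: eq_forallb => s; rewrite hw. Qed.

Lemma widen_inj m n (le : (m <= n)%N) : injective (widen_ord le).
Proof. by move=> x y h; apply: val_inj; exact: (congr1 val h). Qed.

Lemma preim_imset_widen m n (le : (m <= n)%N) (G : {set 'I_m}) :
  widen_ord le @^-1: (widen_ord le @: G) = G.
Proof.
by apply/setP => x; rewrite inE mem_imset //; apply: widen_inj.
Qed.

Lemma imset_preim_widen m n (le : (m <= n)%N) (G : {set 'I_n}) :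
  (forall x, x \in G -> (x < m)%N) -> widen_ord le @: (widen_ord le @^-1: G) = G.
Proof.
move=> H; apply/setP => x; apply/imsetP/idP => [[y]|xG]; first by rewrite inE => yG ->.
exists (Ordinal (H x xG)); rewrite ?inE; last exact: val_inj.
by have -> : widen_ord le (Ordinal (H x xG)) = x by apply: val_inj.
Qed.

Lemma sum_widen (R : nmodType) m n (le : (m <= n)%N) (P : pred {set 'I_n})
   (F : {set 'I_n} -> R) :
  (forall G, P G -> forall x, x \in G -> (x < m)%N) ->
  \sum_(G | P G) F G =
  \sum_(G' : {set 'I_m} | P (widen_ord le @: G')) F (widen_ord le @: G').
Proof.
move=> H.
rewrite (reindex_onto (fun G' : {set 'I_m} => widen_ord le @: G') (fun G : {set 'I_n} => widen_ord le @^-1: G)) /=.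
  by apply: eq_bigl => G'; rewrite preim_imset_widen eqxx andbT.
by move=> G PG; apply: imset_preim_widen; apply: H.
Qed.

Definition BF n (F : {set 'I_n}) : {set {set 'I_n}} :=
  [set tpath_vertices t s | s in F].

Lemma tpath_self n (s : 'I_n) : s \in tpath_vertices t s.
Proof. by rewrite in_tpath leqnn leq_addr. Qed.

Lemma tpath_inj n : injective (@tpath_vertices t n).
Proof.
move=> s s' E; have h1 := tpath_self s; have h2 := tpath_self s'.
rewrite E in_tpath in h1; rewrite -E in_tpath in h2.
case/andP: h1 => h1 _; case/andP: h2 => h2 _.
by apply: val_inj; apply/eqP; rewrite eqn_leq h1 h2.
Qed.

Lemma card_BF n (F : {set 'I_n}) : #|BF F| = #|F|.
Proof. by rewrite card_imset //; apply: tpath_inj. Qed.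

Lemma card_pred_ord n (p : pred nat) :
  #|[set v : 'I_n | p v]| = (\sum_(0 <= v < n) p v)%N.
Proof.
rewrite -sum1_card big_mkcond big_mkord /=; apply: eq_bigr => i _.
by rewrite inE; case: (p i).
Qed.

Lemma card_tpath n (s : 'I_n) : #|tpath_vertices t s| = minn t.+1 (n - s).
Proof.
rewrite /tpath_vertices (card_pred_ord n (fun v => (s <= v)%N && (v <= s + t)%N)).
move: (val s) => {}s; elim: n => [|n IH]; first by rewrite big_geq // sub0n minn0.
rewrite big_nat_recr //= IH.
case: (ltnP n s) => h1.
  by rewrite /= addn0 (eqP (_ : n - s == 0)%N) ?subn_eq0 ?(ltnW h1) //
    (eqP (_ : n.+1 - s == 0)%N) ?subn_eq0.
rewrite /=.
case: (leqP n (s + t)) => h2; last first.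
  rewrite addn0 !(minn_idPl _) //.
    by rewrite ltn_subRL ltnS ltnW.
  by rewrite ltn_subRL.
rewrite !(minn_idPr _) ?subSn // ?leq_subLR ?addnS ?ltnS 1?addnC //.
  by rewrite leq_subLR.
by apply: (leq_trans h2); rewrite addnC leqnSn.
Qed.

Lemma card_tpath_bnd n (s : 'I_n) : (s + t < n)%N -> #|tpath_vertices t s| = t.+1.
Proof. by move=> h; rewrite card_tpath; apply/minn_idPl; rewrite ltn_subRL. Qed.

Lemma BF_triv n (F : {set 'I_n}) : disjoint_tpath_family t F -> trivIset (BF F).
Proof.
case/andP=> _ /forall_inP H; apply/trivIsetP => A B /imsetP[s sF ->] /imsetP[s' s'F ->] ne.
apply: (implyP (forall_inP (H s sF) s' s'F)).
by apply: contraNneq ne => ->.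
Qed.

Lemma cover_BF_card n (F : {set 'I_n}) : disjoint_tpath_family t F ->
  #|cover (BF F)| = (t.+1 * #|F|)%N.
Proof.
move=> fF; have := BF_triv fF; rewrite /trivIset => /eqP <-.
rewrite -card_BF mulnC -sum_nat_const; apply: eq_bigr => B /imsetP[s sF ->].
by apply: card_tpath_bnd; move: fF; rewrite famP => /andP[/forall_inP b _]; apply: b.
Qed.

Lemma fam_card n (F : {set 'I_n}) : disjoint_tpath_family t F -> (t.+1 * #|F| <= n)%N.
Proof.
move=> fF; rewrite -cover_BF_card //.
by apply: leq_trans (max_card _) _; rewrite card_ord.
Qed.

End Fam.

Section URec.
Variable t : nat.

Lemma U_small h : (h <= t)%N -> U t h = 'X^h.
Proof.
move=> ht; rewrite /U (big_pred1 set0) ?cards0 ?muln0 ?subn0 ?expr0 ?scale1r //.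
move=> F; apply/idP/eqP => [fF|->].
  apply/setP => s; rewrite inE; apply/negbTE/negP => sF.
  move: fF; rewrite famP => /andP[/forall_inP b _]; have := b s sF.
  by rewrite ltnNge (leq_trans ht (leq_addl _ _)).
by rewrite famP; apply/andP; split; apply/forall_inP => s; rewrite inE.
Qed.

Lemma U_rec h : (t <= h)%N -> U t h.+1 = 'X * U t h - U t (h - t).
Proof.
move=> th.
have hs0 : (h - t < h.+1)%N by rewrite ltnS leq_subr.
pose s0 := Ordinal hs0.
rewrite /U (bigID (fun F : {set 'I_h.+1} => s0 \in F)) /= addrC.
congr (_ + _).
- have cond : forall G : {set 'I_h},
    disjoint_tpath_family t (widen_ord (leqnSn h) @: G) &&
    (s0 \notin widen_ord (leqnSn h) @: G) = disjoint_tpath_family t G.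
    move=> G; rewrite !famP pw_imset // bnd_imset //.
    apply/idP/idP.
      case/andP => /andP[/forall_inP b p] n; rewrite p andbT.
      apply/forall_inP => s sG; have := b s sG; rewrite ltnS => le.
      have ne : widen_ord (leqnSn h) s != s0 by apply: contraNneq n => <-; exact: imset_f.
      move: ne; rewrite -val_eqE /= => ne.
      have ne2 : (s + t != h)%N by apply: contra ne => /eqP E; rewrite -[X in (X - t)%N]E addnK.
      by rewrite ltn_neqAle ne2 le.
    case/andP=> /forall_inP b p; rewrite p andbT; apply/andP; split.
      by apply/forall_inP => s sG; rewrite ltnS ltnW // b.
    apply/imsetP => [[y yG E]]; have := b y yG; move: (congr1 val E) => /= <-.
    by rewrite subnK // ltnn.
  rewrite (@sum_widen _ h h.+1 (leqnSn h)); last first.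
    move=> G /andP[fG nG] x xG; move: fG; rewrite famP => /andP[/forall_inP b _].
    have := b x xG; rewrite ltnS => le.
    have : x != s0 by apply: contraNneq nG => <-.
    rewrite -val_eqE /= => ne.
    have ne2 : (x + t != h)%N by apply: contra ne => /eqP E; rewrite -[X in (X - t)%N]E addnK.
    have : (x + t < h)%N by rewrite ltn_neqAle ne2 le.
    exact: leq_ltn_trans (leq_addr _ _).
  rewrite mulr_sumr (eq_bigl _ _ cond); apply: eq_bigr => G fG.
  rewrite card_imset; last exact: widen_inj.
  by rewrite subSn ?fam_card // exprS scalerAr.
- have le2 : (h - t <= h.+1)%N by rewrite (leq_trans (leq_subr _ _)).
  pose w := widen_ord le2.
  have wv : forall y, val (w y) = val y by [].
  rewrite (reindex_onto (fun G : {set 'I_(h - t)} => s0 |: (w @: G))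
                        (fun F : {set 'I_h.+1} => w @^-1: F)) /=; last first.
    move=> F /andP[fF sF]; apply/setP => x; rewrite in_setU1.
    case: eqP => [->|ne] /=; first by rewrite sF.
    apply/imsetP/idP => [[y]|xF]; first by rewrite inE => yF ->.
    have lt : (x < h - t)%N.
      move: fF; rewrite famP => /andP[_ /forall_inP p].
      case: (ltngtP x s0) => // [gt|eq]; last by case: ne; apply: val_inj.
      have := implyP (forall_inP (p s0 sF) x xF) gt; rewrite /= subnK //.
      by rewrite ltnNge -ltnS ltn_ord.
    exists (Ordinal lt); last exact: val_inj.
    by rewrite inE; have -> : w (Ordinal lt) = x by apply: val_inj.
  have ns0 : forall G : {set 'I_(h - t)}, s0 \notin w @: G.
    move=> G; apply/imsetP => [[y _ E]]; move: (congr1 val E) => /= E'.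
    by move: (ltn_ord y); rewrite -E' ltnn.
  have famI : forall G : {set 'I_(h - t)},
      disjoint_tpath_family t (s0 |: w @: G) = disjoint_tpath_family t G.
    move=> G; rewrite !famP; apply/idP/idP.
      case/andP => /forall_inP b /forall_inP p; apply/andP; split.
        apply/forall_inP => s sG.
        have := forall_inP (p (w s) (setU1r _ (imset_f _ sG))) s0 (setU11 _ _).
        by rewrite /= ltn_ord.
      apply/forall_inP => s sG; apply/forall_inP => s' s'G.
      exact: (forall_inP (p (w s) (setU1r _ (imset_f _ sG))) (w s') (setU1r _ (imset_f _ s'G))).
    case/andP => /forall_inP b /forall_inP p; apply/andP; split.
      apply/forall_inP => x /setU1P [->|/imsetP [y yG ->]] /=; first by rewrite subnK.
      by rewrite (leq_trans (b y yG)) // ltnW // ltnS leq_subr.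
    apply/forall_inP => x xG; apply/forall_inP => x' x'G; apply/implyP => lt.
    case/setU1P: xG => [E|/imsetP [y yG E]]; case/setU1P: x'G => [E'|/imsetP [y' y'G E']].
    + by move: lt; rewrite E E' ltnn.
    + by move: lt; rewrite E E' /= ltnNge ltnW.
    + by rewrite E E' /= b.
    + by rewrite E E' /=; move: lt; rewrite E E' /=; apply/implyP/(forall_inP (p y yG) y' y'G).
  rewrite -sumrN; apply: eq_big => G.
    rewrite famI setU11 andbT; case: (disjoint_tpath_family t G) => //=.
    apply/eqP/setP => y; rewrite inE in_setU1 mem_imset; last first.
      by move=> a b /(congr1 val) /= /val_inj.
    suff -> : (w y == s0) = false by [].
    apply/negbTE; apply: contraNneq (ns0 [set y]) => <-; exact: imset_f (set11 y).
  move=> /andP[/andP[fG _] _]; rewrite famI in fG.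
  rewrite cardsU1 ns0 card_imset; last by move=> a b /(congr1 val) /= /val_inj.
  rewrite add1n exprS mulN1r scaleNr; congr (- (_ *: 'X^_)).
  by rewrite mulnS subnDA subSS.
Qed.

End URec.

Lemma alt_sum (T : finType) (A : {set T}) :
  \sum_(F : {set T} | F \subset A) (-1) ^+ #|F| = (A == set0)%:R :> int.
Proof.
have [->|] := eqVneq A set0.
  rewrite (big_pred1 set0) ?cards0 ?expr0 // => F; exact: subset0.
case/set0Pn => a aA /=.
rewrite (bigID (fun F : {set T} => a \in F)) /=.
rewrite (reindex_onto (fun G : {set T} => a |: G) (fun F : {set T} => F :\ a)) /=;
  last by move=> F /andP[_ aF]; rewrite setD1K.
rewrite -[RHS](subrr (\sum_(F : {set T} | (F \subset A) && (a \notin F)) (-1) ^+ #|F|)).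
rewrite addrC; congr (_ + _).
rewrite -sumrN; apply: eq_big => G.
  rewrite setU11 andbT subUset sub1set aA /=.
  case: (boolP (a \in G)) => aG /=; last by rewrite setU1K // eqxx andbT.
  rewrite andbF; have na : a \notin (a |: G) :\ a by rewrite setD11.
  have -> : ((a |: G) :\ a == G) = false.
    by apply/negbTE; apply: contraNneq na => ->.
  by rewrite andbF.
by move=> /andP[/andP[_ _] /eqP E]; rewrite cardsU1 -{1}E setD11 add1n exprS mulN1r.
Qed.

Section Comb.
Variable t : nat.

Definition good n (S : {set 'I_n}) (P : {set {set 'I_n}}) :=
  [&& partition P S, [forall B in P, #|B| == t.+1] & noncrossing P].

Lemma muE m : mu t m = #|[set P | good [set: 'I_m] P]|.
Proof. by []. Qed.

Lemma ncP m (P : {set {set 'I_m}}) :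
  reflect (forall B1 B2, B1 \in P -> B2 \in P -> B1 != B2 ->
     forall a b c d : 'I_m, (a < b)%N -> (b < c)%N -> (c < d)%N ->
     a \in B1 -> c \in B1 -> b \in B2 -> d \in B2 -> False)
   (noncrossing P).
Proof.
apply: (iffP idP).
  move=> /forall_inP H B1 B2 B1P B2P ne a b c d ab bc cd aB cB bB dB.
  have := implyP (forall_inP (H B1 B1P) B2 B2P) ne.
  move=> /forallP /(_ a) /forallP /(_ b) /forallP /(_ c) /forallP /(_ d).
  by rewrite ab bc cd aB cB bB dB.
move=> H; apply/forall_inP => B1 B1P; apply/forall_inP => B2 B2P; apply/implyP => ne.
apply/forallP => a; apply/forallP => b; apply/forallP => c; apply/forallP => d.
apply/negP => /and5P [ab bc cd aB /and3P [cB bB dB]].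
exact: (H B1 B2 B1P B2P ne a b c d ab bc cd aB cB bB dB).
Qed.

Lemma ncS m (P Q : {set {set 'I_m}}) : P \subset Q -> noncrossing Q -> noncrossing P.
Proof.
move=> /subsetP sPQ /ncP H; apply/ncP => B1 B2 B1P B2P.
exact: H (sPQ _ B1P) (sPQ _ B2P).
Qed.

Section Relabel.
Variables (k n : nat) (f : 'I_k -> 'I_n).
Hypothesis finc : forall i j : 'I_k, (i < j)%N -> (f i < f j)%N.

Lemma frefl i j : (f i < f j)%N -> (i < j)%N.
Proof.
move=> h; case: (ltngtP i j) => // [ji|ij]; first by move: (finc ji); rewrite ltnNge ltnW.
by move: h; rewrite (val_inj ij) ltnn.
Qed.

Lemma finj : injective f.
Proof.
move=> i j E; apply: val_inj; case: (ltngtP i j) => // h.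
  by move: (finc h); rewrite E ltnn.
by move: (finc h); rewrite E ltnn.
Qed.

Definition phi (P : {set {set 'I_k}}) : {set {set 'I_n}} := [set f @: (B : {set 'I_k}) | B in P].

Lemma phi_inj : injective phi.
Proof. exact: imset_inj (imset_inj finj). Qed.

Lemma nc_phi P : noncrossing (phi P) = noncrossing P.
Proof.
apply/idP/idP => /ncP H; apply/ncP.
  move=> B1 B2 B1P B2P ne a b c d ab bc cd aB cB bB dB.
  apply: (H (f @: B1) (f @: B2) (imset_f _ B1P) (imset_f _ B2P) _ (f a) (f b) (f c) (f d));
    rewrite ?finc ?imset_f //.
  by rewrite (inj_eq (imset_inj finj)).
move=> B1' B2' /imsetP[B1 B1P ->] /imsetP[B2 B2P ->] ne a' b' c' d' ab bc cd.
move=> /imsetP[a aB Ea] /imsetP[c cB Ec] /imsetP[b bB Eb] /imsetP[d dB Ed]; subst a' b' c' d'.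
apply: (H B1 B2 B1P B2P _ a b c d); rewrite ?frefl //.
by apply: contraNneq ne => ->.
Qed.

Lemma relabel : #|[set P | good (f @: [set: 'I_k]) P]| = mu t k.
Proof.
rewrite muE -(card_imset _ phi_inj).
suff -> : [set P | good (f @: [set: 'I_k]) P] = phi @: [set P | good [set: 'I_k] P] by [].
apply/setP => Q; rewrite inE; apply/idP/imsetP.
  case/and3P => pQ /forall_inP sQ ncQ.
  have sub : forall B, B \in Q -> f @: (f @^-1: B) = B.
    move=> B BQ; apply/setP => x; apply/imsetP/idP => [[y]|xB]; first by rewrite inE => ? ->.
    have : x \in cover Q by apply/bigcupP; exists B.
    rewrite (cover_partition pQ) => /imsetP [y _ E].
    by exists y; rewrite // inE -E.
  have phiQ : phi [set f @^-1: (B : {set 'I_n}) | B in Q] = Q.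
    rewrite /phi -imset_comp; apply/setP => B; apply/imsetP/idP => [[B' B'Q ->]|BQ].
      by rewrite /= sub.
    by exists B => //=; rewrite sub.
  exists [set f @^-1: (B : {set 'I_n}) | B in Q]; last by rewrite phiQ.
  rewrite inE /good; apply/and3P; split.
  - have E := phiQ; rewrite /phi in E.
    case/and3P: pQ => /eqP cQ tQ s0Q.
    apply/and3P; split.
    + apply/eqP/setP => x; rewrite inE; apply/bigcupP.
      have : f x \in cover Q by rewrite cQ imset_f ?inE.
      case/bigcupP => B BQ fxB; exists (f @^-1: B); first exact: imset_f.
      by rewrite inE.
    + apply/trivIsetP => A1 A2 /imsetP[B1 B1Q ->] /imsetP[B2 B2Q ->] ne.
      have ne' : B1 != B2 by apply: contraNneq ne => ->.
      have := trivIsetP tQ B1 B2 B1Q B2Q ne' => /disjP D.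
      by apply/disjP => x; rewrite !inE; apply: D.
    + apply/imsetP => [[B BQ E0]].
      have B0 : B = set0 by rewrite -(sub B BQ) -E0 imset0.
      by move: BQ; rewrite B0 (negbTE s0Q).
  - apply/forall_inP => B' /imsetP [B BQ ->].
    by rewrite -(card_imset _ finj) sub // sQ.
  - by rewrite -nc_phi phiQ.
case=> P; rewrite inE => /and3P [pP /forall_inP sP ncP'] ->.
apply/and3P; split.
- have pP' := pP; case/and3P: pP => /eqP cP tP s0P.
  apply/and3P; split.
  + apply/eqP/setP => y; apply/bigcupP/imsetP.
      by case=> B' /imsetP[B BP ->] /imsetP[x xB ->]; exists x; rewrite ?inE.
    case=> x _ ->; have : x \in cover P by rewrite cP inE.
    by case/bigcupP => B BP xB; exists (f @: B); rewrite ?imset_f.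
  + apply/trivIsetP => A1 A2 /imsetP[B1 B1P ->] /imsetP[B2 B2P ->] ne.
    have ne' : B1 != B2 by apply: contraNneq ne => ->.
    have := trivIsetP tP B1 B2 B1P B2P ne' => /disjP D.
    apply/disjP => y /imsetP[x1 x1B ->] /imsetP[x2 x2B E].
    by rewrite (finj E) in x1B; apply: D x1B x2B.
  + apply/imsetP => [[B BP E0]].
    have B0 : B = set0 by apply/eqP; rewrite -(imset_eq0 f) -E0.
    by move: BP; rewrite B0 (negbTE s0P).
- apply/forall_inP => B' /imsetP [B BP ->]; rewrite (card_imset _ finj); exact: sP.
- by rewrite (nc_phi P).
Qed.

End Relabel.

Lemma exists_enum n (S : {set 'I_n}) :
  exists f : 'I_#|S| -> 'I_n,
    (forall i j : 'I_#|S|, (i < j)%N -> (f i < f j)%N) /\ f @: [set: 'I_#|S|] = S.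
Proof.
exists (fun i => enum_val i); split.
  move=> i j ij.
  have srt : sorted (relpre val ltn) (enum S).
    rewrite /enum_mem -enumT; apply: sorted_filter; first by move=> x y z; apply: ltn_trans.
    by rewrite -sorted_map val_enum_ord iota_ltn_sorted.
  have x0 : 'I_n := enum_val i.
  have Hs := sorted_ltn_nth (fun x y z : 'I_n => @ltn_trans (val x) (val y) (val z)) x0 srt.
  rewrite (enum_val_nth x0 i) (enum_val_nth x0 j); apply: Hs => //; rewrite inE -cardE ltn_ord //.
apply/setP => x; apply/imsetP/idP => [[i _ ->]|xS]; first exact: enum_valP.
by exists (enum_rank_in xS x); rewrite ?inE // enum_rankK_in.
Qed.

Lemma goodS_card n (S : {set 'I_n}) : #|[set P | good S P]| = mu t #|S|.
Proof.
have [f [finc fS]] := exists_enum S.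
by rewrite -(relabel finc) fS.
Qed.

End Comb.

Section Comb2.
Variable t : nat.

Lemma nc_union n (P R : {set {set 'I_n}}) :
  noncrossing P ->
  (forall B, B \in R -> forall a b c : 'I_n, a \in B -> c \in B ->
      (a < b)%N -> (b < c)%N -> b \in B) ->
  trivIset (P :|: R) -> noncrossing (P :|: R).
Proof.
move=> /ncP ncP0 conv tr; apply/ncP => B1 B2 B1in B2in ne a b c d ab bc cd aB cB bB dB.
have /disjP D := trivIsetP tr B1 B2 B1in B2in ne.
case/setUP: B1in => [B1P|B1R]; last by apply: (D b _ bB); apply: (conv B1 B1R a b c).
case/setUP: B2in => [B2P|B2R]; last by apply: (D c cB); apply: (conv B2 B2R b c d).
exact: (ncP0 B1 B2 B1P B2P ne a b c d).
Qed.

Lemma conv_tpath n (s : 'I_n) (a b c : 'I_n) :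
  a \in tpath_vertices t s -> c \in tpath_vertices t s ->
  (a < b)%N -> (b < c)%N -> b \in tpath_vertices t s.
Proof.
rewrite !in_tpath => /andP[sa _] /andP[_ ct] ab bc.
by rewrite (leq_trans sa (ltnW ab)) (leq_trans (ltnW bc) ct).
Qed.

Lemma removal n (F : {set 'I_n}) : disjoint_tpath_family t F ->
  #|[set sg | good t [set: 'I_n] sg & BF t F \subset sg]| =
  #|[set P | good t (~: cover (BF t F)) P]|.
Proof.
move=> fF; set R := BF t F; set S := ~: cover R.
have trB : trivIset R := BF_triv fF.
have szB : forall B, B \in R -> #|B| = t.+1.
  move=> B /imsetP[s sF ->]; apply: card_tpath_bnd.
  by move: fF; rewrite famP => /andP[/forall_inP b _]; apply: b.
have neB : forall B, B \in R -> B != set0.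
  by move=> B /imsetP[s sF ->]; apply/set0Pn; exists s; apply: tpath_self.
have convB : forall B, B \in R -> forall a b c : 'I_n, a \in B -> c \in B ->
      (a < b)%N -> (b < c)%N -> b \in B.
  by move=> B /imsetP[s sF ->]; apply: conv_tpath.
have key : forall P, good t S P -> [disjoint P & R].
  move=> P /and3P[pP _ _]; apply/disjP => B BP BR.
  have h1 := partitionS pP BP.
  have h2 : B \subset cover R by apply: (bigcup_sup B BR).
  have := neB B BR; case/set0Pn => x xB.
  by move: (subsetP h1 x xB) (subsetP h2 x xB); rewrite inE => /negP.
rewrite -(@card_in_imset _ _ (fun P => P :|: R) [set P | good t S P]); last first.
  move=> P1 P2; rewrite !inE => g1 g2 E.
  have e1 := setDidPl (key P1 g1); have e2 := setDidPl (key P2 g2).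
  by rewrite -e1 -e2 -[P1 :\: R]setU0 -[P2 :\: R]setU0 -(setDv R) -!setDUl E.
suff -> : [set sg | good t [set: 'I_n] sg & R \subset sg] =
          (fun P => P :|: R) @: [set P | good t S P] by [].
apply/setP => sg; rewrite inE; apply/idP/imsetP.
  case/andP => /and3P[psg /forall_inP szsg ncsg] sub.
  have tsg := partition_trivIset psg; have csg := cover_partition psg.
  exists (sg :\: R); last first.
    apply/setP => B; rewrite in_setU in_setD.
    by case: (boolP (B \in R)) => BR /=; [rewrite (subsetP sub) | rewrite orbF].
  rewrite inE; apply/and3P; split.
  - apply/and3P; split.
    + apply/eqP/setP => x; apply/bigcupP/idP.
        case=> B /setDP[Bsg BnR] xB; rewrite inE; apply/bigcupP => [[B' B'R xB']].
        have ne : B != B' by apply: contraNneq BnR => ->.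
        have /disjP D := trivIsetP tsg B B' Bsg (subsetP sub _ B'R) ne.
        exact: D xB xB'.
      move=> xS; have : x \in cover sg by rewrite csg inE.
      case/bigcupP => B Bsg xB; exists B => //; rewrite in_setD Bsg andbT.
      apply: contraL xS => BR; rewrite inE negbK; apply/bigcupP; by exists B.
    + exact: trivIsetD.
    + by rewrite in_setD negb_and (partition0 psg) orbT.
  - apply/forall_inP => B /setDP[Bsg _]; exact: szsg.
  - by apply: ncS ncsg; apply: subsetDl.
case=> P; rewrite inE => gP ->; have gP' := gP.
case/and3P: gP => pP /forall_inP szP ncP'.
have cP := cover_partition pP; have tP := partition_trivIset pP.
rewrite subsetUr andbT; apply/and3P; split.
- apply/and3P; split.
  + apply/eqP/setP => x; rewrite inE; apply/bigcupP.
    case: (boolP (x \in cover R)) => xc.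
      by case/bigcupP: xc => B BR xB; exists B; rewrite ?inE ?BR ?orbT.
    have : x \in cover P by rewrite cP inE.
    by case/bigcupP => B BP xB; exists B; rewrite ?inE ?BP.
  + rewrite setUC; apply: trivIsetU => //.
    by apply/disjP => x xc; rewrite cP inE xc.
  + rewrite in_setU negb_or (partition0 pP) /=; apply/negP => /neB; by rewrite eqxx.
- apply/forall_inP => B /setUP[BP|BR]; first exact: szP.
  by rewrite szB.
- apply: nc_union => //.
  rewrite setUC; apply: trivIsetU => //.
  by apply/disjP => x xc; rewrite cP inE xc.
Qed.

Definition hull n (B : {set 'I_n}) : {set 'I_n} :=
  [set v : 'I_n | [exists b1 in B, exists b2 in B, (b1 <= v)%N && (v <= b2)%N]].

Lemma interval_exists n (sg : {set {set 'I_n}}) :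
  good t [set: 'I_n] sg -> sg != set0 ->
  exists s : 'I_n, (s + t < n)%N && (tpath_vertices t s \in sg).
Proof.
case/and3P => psg /forall_inP szsg ncsg; case/set0Pn => B0 B0sg.
have csg := cover_partition psg; have tsg := partition_trivIset psg.
have step : forall B, B \in sg ->
   (exists s : 'I_n, (s + t < n)%N && (tpath_vertices t s \in sg)) \/
   (exists2 B', B' \in sg & (#|hull B'| < #|hull B|)%N).
  move=> B Bsg.
  case: (boolP [forall b1 in B, forall b2 in B, forall v : 'I_n,
                  ((b1 <= v)%N && (v <= b2)%N) ==> (v \in B)]) => [conv|nconv].
    left.
    have conv' : forall b1 b2 v : 'I_n, b1 \in B -> b2 \in B ->
        (b1 <= v)%N -> (v <= b2)%N -> v \in B.
      move=> b1 b2 v b1B b2B h1 h2.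
      have := forallP (forall_inP (forall_inP conv b1 b1B) b2 b2B) v.
      by rewrite h1 h2.
    have [b0 b0B] : exists b0, b0 \in B by apply/set0Pn; apply: (partition_neq0 psg).
    case: (arg_minnP (fun i : 'I_n => val i) b0B) => s sB smin.
    have szB : #|B| = t.+1 by apply/eqP; apply: szsg.
    have Bsub : B \subset tpath_vertices t s.
      apply/subsetP => b bB; rewrite in_tpath smin //=.
      rewrite leqNgt; apply/negP => gt.
      have sub2 : tpath_vertices t s \subset B.
        apply/subsetP => v; rewrite in_tpath => /andP[sv vt].
        by apply: (conv' s b v sB bB sv); rewrite (leq_trans vt) // ltnW.
      have bnot : b \notin tpath_vertices t s.
        by apply/negP; rewrite in_tpath => /andP[_ h]; move: gt; rewrite ltnNge h.
      have prop : tpath_vertices t s \proper B.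
        rewrite properE sub2 /=; apply/negP => /subsetP /(_ b bB); exact/negP.
      have := proper_card prop.
      by rewrite card_tpath_bnd ?szB ?ltnn // (ltn_trans gt (ltn_ord b)).
    have cardT : #|tpath_vertices t s| = t.+1.
      apply/eqP; rewrite eqn_leq -{2}szB subset_leq_card // andbT.
      by rewrite card_tpath geq_minl.
    exists s; apply/andP; split.
      have : (t.+1 <= n - s)%N by rewrite -cardT card_tpath geq_minr.
      by rewrite ltn_subRL.
    have -> : tpath_vertices t s = B.
      by apply/eqP; rewrite eq_sym eqEcard Bsub cardT szB leqnn.
    exact: Bsg.
  right.
  case/forall_inPn: nconv => b1 b1B /forall_inPn [b2 b2B /forallPn [v]].
  rewrite negb_imply => /andP[/andP[b1v vb2] vnB].
  have : v \in cover sg by rewrite csg inE.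
  case/bigcupP => B' B'sg vB'.
  have ne : B != B' by apply: contraNneq vnB => ->.
  have /disjP D := trivIsetP tsg B B' Bsg B'sg ne.
  have ne' : B' != B by rewrite eq_sym.
  have lt1 : (b1 < v)%N.
    rewrite ltn_neqAle b1v andbT; apply/negP => /eqP E.
    by move: vnB; rewrite (_ : v = b1) ?b1B //; apply: val_inj.
  have lt2 : (v < b2)%N.
    rewrite ltn_neqAle vb2 andbT; apply/negP => /eqP E.
    by move: vnB; rewrite (_ : v = b2) ?b2B //; apply: val_inj.
  have /ncP ncsg' := ncsg.
  have inside : forall d, d \in B' -> (b1 < d)%N && (d < b2)%N.
    move=> d dB'; apply/andP; split.
      case: (ltngtP b1 d) => // [db|E]; last first.
        by have := D b1 b1B; rewrite (val_inj E) => /(_ dB').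
      exfalso; exact: (ncsg' B' B B'sg Bsg ne' d b1 v b2 db lt1 lt2 dB' vB' b1B b2B).
    case: (ltngtP d b2) => // [bd|E]; last first.
      by have := D b2 b2B; rewrite -(val_inj E) => /(_ dB').
    exfalso; exact: (ncsg' B B' Bsg B'sg ne b1 v b2 d lt1 lt2 bd b1B b2B vB' dB').
  exists B' => //; apply: proper_card; rewrite properE; apply/andP; split.
    apply/subsetP => x; rewrite !inE => /exists_inP [e1 e1B /exists_inP [e2 e2B /andP[h1 h2]]].
    apply/exists_inP; exists b1 => //; apply/exists_inP; exists b2 => //.
    case/andP: (inside e1 e1B) => i1 _; case/andP: (inside e2 e2B) => _ i2.
    by rewrite (leq_trans (ltnW i1) h1) (leq_trans h2 (ltnW i2)).
  apply/negP => /subsetP /(_ b1).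
  have -> : b1 \in hull B.
    rewrite inE; apply/exists_inP; exists b1 => //; apply/exists_inP; exists b2 => //.
    by rewrite leqnn (leq_trans b1v vb2).
  move=> /(_ isT); rewrite inE => /exists_inP [e1 e1B /exists_inP [e2 e2B /andP[h1 h2]]].
  by case/andP: (inside e1 e1B) => i1 _; move: h1; rewrite leqNgt i1.
suff : forall N B, B \in sg -> (#|hull B| <= N)%N ->
   exists s : 'I_n, (s + t < n)%N && (tpath_vertices t s \in sg).
  by move=> H; apply: (H _ B0 B0sg (leqnn _)).
elim => [|N IH] B Bsg hB.
  by case: (step B Bsg) => // [[B' _]]; rewrite (leqn0 _ ) in hB; rewrite (eqP hB).
case: (step B Bsg) => // [[B' B'sg lt]]; apply: (IH B' B'sg).
by rewrite -ltnS (leq_trans lt hB).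
Qed.

End Comb2.

Section LU0sec.
Variable t : nat.

Lemma LUsum h : Lfun t (U t h) =
  \sum_(F : {set 'I_h} | disjoint_tpath_family t F)
     (-1) ^+ #|F| * (mu t (h - t.+1 * #|F|))%:R.
Proof.
rewrite /U Lfun_sum; apply: eq_bigr => F _; by rewrite Lfun_scale LfunXn.
Qed.

Lemma count_remove h (F : {set 'I_h}) : disjoint_tpath_family t F ->
  mu t (h - t.+1 * #|F|) =
  #|[set sg | good t [set: 'I_h] sg & BF t F \subset sg]|.
Proof.
move=> fF; rewrite removal // goodS_card; congr (mu t _).
by rewrite -cover_BF_card // [RHS]cardsCs setCK card_ord.
Qed.

Definition Aset n (sg : {set {set 'I_n}}) : {set 'I_n} :=
  [set s : 'I_n | (s + t < n)%N && (tpath_vertices t s \in sg)].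

Lemma famA n (sg : {set {set 'I_n}}) (F : {set 'I_n}) : trivIset sg ->
  (disjoint_tpath_family t F && (BF t F \subset sg)) = (F \subset Aset sg).
Proof.
move=> tsg; apply/idP/subsetP.
  case/andP => fF sub s sF; rewrite inE; apply/andP; split.
    by move: fF; rewrite famP => /andP[/forall_inP b _]; apply: b.
  by apply: (subsetP sub); apply: imset_f.
move=> H; apply/andP; split.
  apply/andP; split.
    by apply/forall_inP => s sF; have := H s sF; rewrite inE => /andP[].
  apply/forall_inP => s sF; apply/forall_inP => s' s'F; apply/implyP => ne.
  have := H s sF; rewrite inE => /andP[_ i1].
  have := H s' s'F; rewrite inE => /andP[_ i2].
  apply: (trivIsetP tsg) => //; apply: contra ne => /eqP E; apply/eqP.
  exact: (@tpath_inj t n s s' E).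
apply/subsetP => B /imsetP[s sF ->].
by have := H s sF; rewrite inE => /andP[].
Qed.

Lemma mu0 : mu t 0 = 1%N.
Proof.
have T0 : [set: 'I_0] = set0 by apply/setP => x; case: x.
rewrite muE.
have -> : [set P | good t [set: 'I_0] P] = [set set0].
  apply/setP => P; rewrite !inE; apply/idP/eqP.
    case/and3P => pP _ _; apply/setP => B; rewrite inE.
    by rewrite (_ : B = set0) ?(partition0 pP) //; apply/setP => x; case: x.
  move=> ->; apply/and3P; split.
  - by rewrite T0 partition_set0.
  - by apply/forall_inP => B; rewrite inE.
  - by apply/forall_inP => B; rewrite inE.
by rewrite cards1.
Qed.

Lemma LU0 h : Lfun t (U t h) = (h == 0%N)%:R.
Proof.
rewrite LUsum.
transitivity (\sum_(F : {set 'I_h} | disjoint_tpath_family t F)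
   \sum_(sg | good t [set: 'I_h] sg && (BF t F \subset sg)) ((-1) ^+ #|F| : int)).
  apply: eq_bigr => F fF; rewrite count_remove // mulr_natr -sumr_const.
  by apply: eq_bigl => sg; rewrite inE.
rewrite (exchange_big_dep (fun sg => good t [set: 'I_h] sg)) /=; last by move=> F sg _ /andP[].
transitivity (\sum_(sg | good t [set: 'I_h] sg) ((Aset sg == set0)%:R : int)).
  apply: eq_bigr => sg gsg; rewrite -alt_sum; apply: eq_bigl => F.
  rewrite gsg /= famA //; by case/and3P: gsg => /partition_trivIset.
case: h => [|h].
  rewrite (eq_bigr (fun _ => 1)); last first.
    by move=> sg _; rewrite (_ : Aset sg = set0) ?eqxx //; apply/setP => x; case: x.
  have -> : \sum_(sg | good t [set: 'I_0] sg) (1 : int) =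
            \sum_(sg in [set sg | good t [set: 'I_0] sg]) 1.
    by apply: eq_bigl => sg; rewrite inE.
  by rewrite sumr_const -muE mu0.
rewrite big1 // => sg gsg.
have ne : sg != set0.
  apply/set0Pn; case/and3P: (gsg) => psg _ _.
  have : (ord0 : 'I_h.+1) \in cover sg by rewrite (cover_partition psg) inE.
  by case/bigcupP => B BP _; exists B.
have [s hs] := interval_exists gsg ne.
suff : Aset sg != set0 by move/negbTE => ->.
by apply/set0Pn; exists s; rewrite inE.
Qed.

End LU0sec.

Section Final.
Variable t : nat.
Hypothesis ht : (1 <= t)%N.

Definition Q k h := Lfun t ('X^k * U t h).

Lemma Q0 h : Q 0 h = (h == 0%N)%:R.
Proof. by rewrite /Q expr0 mul1r LU0. Qed.

Lemma Qrec k h : Q k.+1 h = Q k h.+1 + (if (t <= h)%N then Q k (h - t) else 0).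
Proof.
rewrite /Q exprSr -mulrA; case: leqP => th.
  by rewrite U_rec // -Lfun_add -mulrDr subrK.
by rewrite (U_small (ltnW th)) (U_small th) addr0 -exprS.
Qed.

Lemma Qvan k : forall h, (k * t < h)%N -> Q k h = 0.
Proof.
elim: k => [|k IH] h lt; first by rewrite Q0; move: lt; rewrite mul0n; case: h.
rewrite Qrec IH ?add0r; last first.
  by rewrite ltnS ltnW // (leq_ltn_trans _ lt) // mulSn leq_addl.
case: leqP => // th; apply: IH; rewrite ltn_subRL -mulSn //.
Qed.

Lemma Qone n : Q n (n * t) = 1.
Proof.
elim: n => [|n IH]; first by rewrite Q0.
rewrite Qrec Qvan ?add0r; last by rewrite ltnS mulSn leq_addl.
by rewrite mulSn leq_addr addKn.
Qed.

Lemma LUU m n : Lfun t (U t m * U t n) =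
  \sum_(F : {set 'I_n} | disjoint_tpath_family t F)
     (-1) ^+ #|F| * Q (n - t.+1 * #|F|) m.
Proof.
rewrite {2}/U mulr_sumr Lfun_sum; apply: eq_bigr => F _.
by rewrite -scalerAr mulrC Lfun_scale.
Qed.

Lemma main1 n m : (n * t < m)%N -> Lfun t (U t m * U t n) = 0.
Proof.
move=> lt; rewrite LUU big1 // => F _; rewrite Qvan ?mulr0 //.
by rewrite (leq_ltn_trans _ lt) // leq_mul2r leq_subr orbT.
Qed.

Lemma main2 n : Lfun t (U t (n * t) * U t n) = 1.
Proof.
rewrite LUU (bigD1 set0) /=; last first.
  by rewrite famP; apply/andP; split; apply/forall_inP => s; rewrite inE.
rewrite cards0 muln0 subn0 Qone mulr1 expr0 big1 ?addr0 // => F /andP[fF ne].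
rewrite Qvan ?mulr0 // ltn_pmul2r //.
have cF : (0 < #|F|)%N by rewrite card_gt0.
have := fam_card fF; move: (t.+1 * #|F|)%N (muln_gt0 t.+1 #|F|) => c; rewrite cF => c0 cn.
by rewrite ltn_subrL c0 (leq_trans c0 cn).
Qed.

End Final.

Theorem mainTheorem2 (t : nat) (ht : (1 <= t)%N) :
  (forall n m : nat, (n * t < m)%N -> Lfun t (U t m * U t n) = 0) /\
  (forall n : nat, Lfun t (U t (n * t) * U t n) = 1).
Proof.
split; [exact: main1 | exact: main2].
Qed.
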